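(* Let $\mathbb{K}$ be a semiring. Every two-way $\mathbb{K}$-automaton admits a $\delta$-local in-covering.
   Context: With $A_{\vdash\dashv}=A\cup\{\vdash,\dashv\}$ ($\vdash,\dashv$ fresh end-markers), a two-way $\mathbb{K}$-automaton $(Q,A,E,I,T)$ has finite state set $Q$, partial functions $I,T:Q\to\mathbb{K}$ (supports $\underline I$, $\underline T$: initial/final states), and a partial function $E:Q\times(A_{\vdash\dashv}\times\{-1,+1\})\times Q\to\mathbb{K}$ whose support $\underline E$ (the transitions) contains no $(p,\vdash,-1,q)$ nor $(p,\dashv,+1,q)$. For $t=(p,a,d,q)$: $\sigma(t)=p$, $\tau(t)=q$, $\delta(t)=d$. A two-way automaton is $\delta$-local if for each state $p$ all transitions outgoing from $p$ have the same direction $\delta$. A morphism from $\mathcal{A}=(Q,A,E,I,T)$ to $\mathcal{B}=(R,A,F,J,U)$ is a map $\varphi:Q\to R$ with $J(\varphi(p))=I(p)$ for $p\in\underline I$, $U(\varphi(p))=T(p)$ for $p\in\underline T$, and for each $t=(p,a,d,q)\in\underline E$, $\tilde\varphi(t)=(\varphi(p),a,d,\varphi(q))\in\underline F$ with $F(\tilde\varphi(t))=E(t)$; it is surjective if $\varphi(Q)=R$, $\varphi(\underline I)=\underline J$, $\varphi(\underline T)=\underline U$, $\tilde\varphi(\underline E)=\underline F$. $\mathcal{A}$ is an in-covering of $\mathcal{B}$ if there is a surjective morphism $\varphi$ such that: for all $r\in\underline J$, $\varphi^{-1}(r)\subseteq\underline I$; for all $r\in\underline U$ there is exactly one $p\in\varphi^{-1}(r)\cap\underline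 T$; for all $t\in\underline F$ and all $q\in\varphi^{-1}(\tau(t))$ there is exactly one $t'\in\underline E$ with $\tilde\varphi(t')=t$ and $\tau(t')=q$. *)

(* Defs.v *)
From mathcomp Require Import all_boot all_algebra.
Set Implicit Arguments. Unset Strict Implicit. Unset Printing Implicit Defensive.

Inductive xletter (A : Type) : Type :=
  | Sym of A
  | LEnd
  | REnd.
Arguments LEnd {A}. Arguments REnd {A}.

Inductive dir : Type := dLeft | dRight .

(* A two-way K-automaton (Q, A, E, I, T) with finite state set Q.
   Partial functions into K are modelled as functions into [option K];
   the support is where the value is [Some _]. *)
Record twa (K : Type) (A : Type) (Q : finType) : Type := Twa {
  init  : Q -> option K;
  final : Q -> option K;
  trans : Q -> xletter A -> dir -> Q -> option K;
  trans_wf : forall p q, trans p LEnd dLeft q = None /\ trans p REnd dRight q = None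
}.

Definition supp {K : Type} (x : option K) : Prop := x <> None.

Definition is_morphism (K A : Type) (Q R : finType)
  (Aut : twa K A Q) (But : twa K A R) (phi : Q -> R) : Prop :=
  (forall p k, init Aut p = Some k -> init But (phi p) = Some k) /\
  (forall p k, final Aut p = Some k -> final But (phi p) = Some k) /\
  (forall p a d q k, trans Aut p a d q = Some k ->
     trans But (phi p) a d (phi q) = Some k).

Definition is_surjective_morphism (K A : Type) (Q R : finType)
  (Aut : twa K A Q) (But : twa K A R) (phi : Q -> R) : Prop :=
  is_morphism Aut But phi /\
  (forall r : R, exists p : Q, phi p = r) /\
  (forall r, supp (init But r) -> exists p, supp (init Aut p) /\ phi p = r) /\
  (forall r, supp (final But r) -> exists p, supp (final Aut p) /\ phi p = r) /\
  (forall r a d s, supp (trans But r a d s) ->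
     exists p q, supp (trans Aut p a d q) /\ phi p = r /\ phi q = s).

Definition is_in_covering_via (K A : Type) (Q R : finType)
  (Aut : twa K A Q) (But : twa K A R) (phi : Q -> R) : Prop :=
  is_surjective_morphism Aut But phi /\
  (forall r, supp (init But r) -> forall p, phi p = r -> supp (init Aut p)) /\
  (forall r, supp (final But r) ->
     exists! p, phi p = r /\ supp (final Aut p)) /\
  (forall r a d s, supp (trans But r a d s) ->
     forall q, phi q = s ->
       exists! p, supp (trans Aut p a d q) /\ phi p = r).

Definition is_in_covering (K A : Type) (Q R : finType)
  (Aut : twa K A Q) (But : twa K A R) : Prop :=
  exists phi : Q -> R, is_in_covering_via Aut But phi.

Definition delta_local (K A : Type) (Q : finType) (Aut : twa K A Q) : Prop :=
  forall p a d q a' d' q',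
    supp (trans Aut p a d q) -> supp (trans Aut p a' d' q') -> d = d'.

(* Main.v *)
Require Import Defs.
From mathcomp Require Import all_boot all_algebra.

Definition toDir (b : bool) : dir := if b then dRight else dLeft.
Definition deq (d1 d2 : dir) : bool :=
  match d1, d2 with dLeft, dLeft => true | dRight, dRight => true | _, _ => false end.

Lemma deqP d1 d2 : deq d1 d2 = true <-> d1 = d2.
Proof. by case: d1; case: d2. Qed.

Section C.
Variables (K A : Type) (Q : finType) (Aut : twa K A Q).

Definition tB (p : Q * bool) (a : xletter A) (d : dir) (q : Q * bool) : option K :=
  if deq (toDir p.2) d then trans Aut p.1 a d q.1 else None.

Lemma tB_wf p q : tB p LEnd dLeft q = None /\ tB p REnd dRight q = None.
Proof.
rewrite /tB; have [H1 H2] := trans_wf Aut p.1 q.1.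
by split; case: (deq _ _).
Qed.

Definition Bt : twa K A (Q * bool)%type :=
  @Twa K A _ (fun p => init Aut p.1) (fun p => if p.2 then final Aut p.1 else None) tB tB_wf.
End C.

Theorem mainTheorem3 (K : pzSemiRingType) (A : finType) (Q : finType)
  (Aut : twa K A Q) :
  exists (Q' : finType) (B : twa K A Q'),
    is_in_covering B Aut /\ delta_local B.
Proof.
exists (Q * bool)%type, (@Bt K A Q Aut); split; last first.
  move=> [p b] a d q a' d' q'; rewrite /supp /= /tB /=.
  case E1: (deq _ d) => //; case E2: (deq _ d') => // _ _.
  by move/deqP: E1 <-; move/deqP: E2.
exists fst; split; [split; [split; [|split]|split; [|split; [|split]]]|split; [|split]].
- by move=> p k.
- by move=> [p [|]] k //=.
- move=> [p b] a d [q b'] k /=; rewrite /tB /=.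
  by case E: (deq _ d) => //.
- by move=> r; exists (r, true).
- by move=> r H; exists (r, true).
- by move=> r H; exists (r, true).
- move=> r a d s H; exists (r, if d is dRight then true else false), (s, true).
  by split=> //; rewrite /= /tB /=; case: d H.
- by move=> r H [p b] /= E; rewrite -E in H.
- move=> r H; exists (r, true); split; first by split.
  by move=> [p [|]] /= [-> H'] //; case: H'.
- move=> r a d s H [q b] /= Hq; exists (r, if d is dRight then true else false).
  split; first by split=> //; rewrite /= /tB /= Hq; case: d H.
  move=> [p b'] /= []; rewrite /supp /tB /=.
  case E: (deq _ d) => // _ ->; move/deqP: E.
  by case: b' {H}; case: d.
Qed.
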